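(* Let $C$ be a constant and $h>0$. On the grid $x_j=x_0+jh$, $j\in\mathbb Z$, consider the linear semidiscrete wave system $$\dot v_j=w_j,\qquad \dot w_j=\frac{v_{j+1}-2v_j+v_{j-1}}{h^2}-Cv_j,\qquad j\in\mathbb Z.$$ Then for every $k=0,1,2,\dots$ the functional $$R_k=\sum_j w_j\,\big(D_0 (D_-D_+)^k v\big)_j\,h=-\sum_j v_j\,\big(D_0 (D_-D_+)^k w\big)_j\,h$$ is conserved along solutions. Moreover, if $\alpha(t,x)$ satisfies $$\alpha_{tt}(t,x)=\frac{\alpha(t,x+h)-2\alpha(t,x)+\alpha(t,x-h)}{h^2}-C\alpha(t,x),$$ then the functional $T=\sum_j\big(\alpha(t,x_j)w_j-\alpha_t(t,x_j)v_j\big)h$ is conserved along solutions.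
   Context: $S_\pm u_j=u_{j\pm1}$, $D_+=(S_+-1)/h$, $D_-=(1-S_-)/h$, $D_0=(S_+-S_-)/(2h)$. Solutions are assumed to decay sufficiently fast as $|j|\to\infty$ for all sums to make sense. *)

(* Defs.v *)
From Stdlib Require Import Reals ZArith Lra Lia.
From Coquelicot Require Import Coquelicot.
Open Scope R_scope.

Definition zsum (u : Z -> R) : R :=
  Series (fun n : nat => u (Z.of_nat n)) +
  Series (fun n : nat => u (- Z.of_nat (S n))%Z).

Definition zsummable (u : Z -> R) : Prop :=
  ex_series (fun n : nat => Rabs (u (Z.of_nat n))) /\
  ex_series (fun n : nat => Rabs (u (- Z.of_nat (S n))%Z)).

Definition Splus (u : Z -> R) : Z -> R := fun j => u (j + 1)%Z.
Definition Sminus (u : Z -> R) : Z -> R := fun j => u (j - 1)%Z.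
Definition Dplus (h : R) (u : Z -> R) : Z -> R := fun j => (Splus u j - u j) / h.
Definition Dminus (h : R) (u : Z -> R) : Z -> R := fun j => (u j - Sminus u j) / h.
Definition Dzero (h : R) (u : Z -> R) : Z -> R :=
  fun j => (Splus u j - Sminus u j) / (2 * h).

Definition DmDp_pow (h : R) (k : nat) (u : Z -> R) : Z -> R :=
  Nat.iter k (fun f => Dminus h (Dplus h f)) u.

Definition Lk (h : R) (k : nat) (u : Z -> R) : Z -> R := Dzero h (DmDp_pow h k u).

Definition is_semidiscrete_wave_solution (h C : R) (v w : R -> Z -> R) : Prop :=
  forall (t : R) (j : Z),
    is_derive (fun s => v s j) t (w t j) /\
    is_derive (fun s => w s j) t
      ((v t (j + 1)%Z - 2 * v t j + v t (j - 1)%Z) / h ^ 2 - C * v t j).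

(* Standing decay assumption: on every compact time interval the solution is
   dominated by a fixed absolutely summable grid function. *)
Definition locally_dominated (v w : R -> Z -> R) : Prop :=
  forall a b : R, exists M : Z -> R, zsummable M /\
    forall t : R, a <= t <= b -> forall j : Z, Rabs (v t j) + Rabs (w t j) <= M j.

Definition Rk (h : R) (k : nat) (v w : R -> Z -> R) (t : R) : R :=
  zsum (fun j => w t j * Lk h k (v t) j * h).

Definition Tfun (h x0 : R) (alpha alpha_t : R -> R -> R) (v w : R -> Z -> R) (t : R) : R :=
  zsum (fun j => (alpha t (x0 + IZR j * h) * w t j
                  - alpha_t t (x0 + IZR j * h) * v t j) * h).

(* Main.v *)
Require Import Defs.
From Stdlib Require Import Reals ZArith.
From Coquelicot Require Import Coquelicot.
From Stdlib Require Import Lra Lia FunctionalExtensionality.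
Import Defs.
Open Scope R_scope.

Lemma ex_series_R_le (a b : nat -> R) :
  (forall n, Rabs (a n) <= b n) -> ex_series b -> ex_series a.
Proof. intros H Hb. apply (ex_series_le a b); [exact H | exact Hb]. Qed.

Lemma zs_pos (u : Z -> R) : zsummable u -> ex_series (fun n => u (Z.of_nat n)).
Proof. intros [H _]. now apply ex_series_Rabs. Qed.
Lemma zs_neg (u : Z -> R) : zsummable u -> ex_series (fun n => u (- Z.of_nat (S n))%Z).
Proof. intros [_ H]. now apply ex_series_Rabs. Qed.

Lemma zsum_ext (u : Z -> R) v : (forall j, u j = v j) -> zsum u = zsum v.
Proof. intros H. unfold zsum. f_equal; apply Series_ext; intros; apply H. Qed.

Lemma zs_dom M (u : Z -> R) : zsummable M -> (forall j, Rabs (u j) <= Rabs (M j)) -> zsummable u.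
Proof.
  intros [H1 H2] H. split.
  - eapply ex_series_R_le; [|exact H1]. intros n. simpl. rewrite Rabs_Rabsolu. apply H.
  - eapply ex_series_R_le; [|exact H2]. intros n. simpl. rewrite Rabs_Rabsolu. apply H.
Qed.

Lemma zs_dom' M u : zsummable M -> (forall j, Rabs (u j) <= M j) -> zsummable u.
Proof. intros H1 H. apply (zs_dom M); auto. intros j. eapply Rle_trans; [apply H| apply Rle_abs]. Qed.

Lemma zs_abs (u : Z -> R) : zsummable u -> zsummable (fun j => Rabs (u j)).
Proof. intros H. apply (zs_dom u); auto. intros; rewrite Rabs_Rabsolu; lra. Qed.

Lemma zs_plus (u : Z -> R) v : zsummable u -> zsummable v -> zsummable (fun j => u j + v j).
Proof.
  intros [Hu1 Hu2] [Hv1 Hv2].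
  assert (HM : zsummable (fun j => Rabs (u j) + Rabs (v j))).
  { split.
    - apply (ex_series_ext (fun n => Rabs (u (Z.of_nat n)) + Rabs (v (Z.of_nat n)))).
      + intros n. symmetry; apply Rabs_pos_eq. apply Rplus_le_le_0_compat; apply Rabs_pos.
      + apply (ex_series_plus _ _ Hu1 Hv1).
    - apply (ex_series_ext (fun n => Rabs (u (- Z.of_nat (S n))%Z) + Rabs (v (- Z.of_nat (S n))%Z))).
      + intros n. symmetry; apply Rabs_pos_eq. apply Rplus_le_le_0_compat; apply Rabs_pos.
      + apply (ex_series_plus _ _ Hu2 Hv2). }
  apply (zs_dom' _ _ HM). intros; apply Rabs_triang.
Qed.

Lemma zs_scal c (u : Z -> R) : zsummable u -> zsummable (fun j => c * u j).
Proof.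
  intros [H1 H2]. split.
  - apply (ex_series_ext (fun n => Rabs c * Rabs (u (Z.of_nat n)))).
    + intros; now rewrite Rabs_mult.
    + apply (ex_series_scal_l _ _ H1).
  - apply (ex_series_ext (fun n => Rabs c * Rabs (u (- Z.of_nat (S n))%Z))).
    + intros; now rewrite Rabs_mult.
    + apply (ex_series_scal_l _ _ H2).
Qed.

Lemma zsum_plus (u : Z -> R) v : zsummable u -> zsummable v -> zsum (fun j => u j + v j) = zsum u + zsum v.
Proof.
  intros Hu Hv. unfold zsum.
  rewrite (Series_plus _ _ (zs_pos _ Hu) (zs_pos _ Hv)).
  rewrite (Series_plus _ _ (zs_neg _ Hu) (zs_neg _ Hv)). ring.
Qed.

Lemma zsum_scal c (u : Z -> R) : zsum (fun j => c * u j) = c * zsum u.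
Proof. unfold zsum. rewrite !Series_scal_l. ring. Qed.

Lemma zsum_lin c1 c2 (u : Z -> R) v : zsummable u -> zsummable v ->
  zsum (fun j => c1 * u j + c2 * v j) = c1 * zsum u + c2 * zsum v.
Proof.
  intros Hu Hv. rewrite zsum_plus by (apply zs_scal; auto). now rewrite !zsum_scal.
Qed.

Lemma zs_lin c1 c2 (u : Z -> R) v : zsummable u -> zsummable v -> zsummable (fun j => c1 * u j + c2 * v j).
Proof. intros; apply zs_plus; apply zs_scal; auto. Qed.

Lemma zs_shiftp (u : Z -> R) : zsummable u -> zsummable (fun j => u (j + 1)%Z).
Proof.
  intros [H1 H2]. split.
  - apply ex_series_incr_1 in H1.
    eapply ex_series_ext; [|exact H1]. intros n. cbv beta. do 2 f_equal. lia.
  - apply ex_series_incr_1.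
    eapply ex_series_ext; [|exact H2]. intros n. cbv beta. do 2 f_equal. lia.
Qed.

Lemma zs_shiftm (u : Z -> R) : zsummable u -> zsummable (fun j => u (j - 1)%Z).
Proof.
  intros [H1 H2]. split.
  - apply ex_series_incr_1.
    eapply ex_series_ext; [|exact H1]. intros n. cbv beta. do 2 f_equal. lia.
  - apply ex_series_incr_1 in H2.
    eapply ex_series_ext; [|exact H2]. intros n. cbv beta. do 2 f_equal. lia.
Qed.

Lemma zsum_shiftp (u : Z -> R) : zsummable u -> zsum (fun j => u (j + 1)%Z) = zsum u.
Proof.
  intros Hu. pose proof (zs_shiftp u Hu) as Hs. unfold zsum.
  rewrite (Series_incr_1 _ (zs_pos _ Hu)).
  rewrite (Series_incr_1 (fun n => u (- Z.of_nat (S n) + 1)%Z) (zs_neg _ Hs)).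
  rewrite (Series_ext (fun k => u (Z.of_nat (S k))) (fun n => u (Z.of_nat n + 1)%Z))
    by (intros; f_equal; lia).
  rewrite (Series_ext (fun k => u (- Z.of_nat (S (S k)) + 1)%Z) (fun n => u (- Z.of_nat (S n))%Z))
    by (intros; f_equal; lia).
  replace (u (- Z.of_nat 1 + 1)%Z) with (u (Z.of_nat 0)) by (f_equal; lia). ring.
Qed.

Lemma zsum_shiftm (u : Z -> R) : zsummable u -> zsum (fun j => u (j - 1)%Z) = zsum u.
Proof.
  intros Hu. rewrite <- (zsum_shiftp _ (zs_shiftm _ Hu)).
  apply zsum_ext. intros j. f_equal. lia.
Qed.

Lemma Series_zero : Series (fun _ : nat => 0) = 0.
Proof.
  rewrite (Series_ext (fun _ => 0) (fun n : nat => 0 * 1)) by (intros; ring).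
  rewrite Series_scal_l. ring.
Qed.

Lemma term_le_Series (a : nat -> R) : (forall n, 0 <= a n) -> ex_series a -> forall n, a n <= Series a.
Proof.
  intros Ha He n. rewrite (Series_incr_n a (S n)) by (lia || auto). simpl pred.
  assert (0 <= Series (fun k => a (S n + k)%nat)).
  { rewrite <- Series_zero. apply Series_le.
    - intros; split; [lra| apply Ha].
    - apply (ex_series_incr_n a (S n)). auto. }
  assert (a n <= sum_f_R0 a n).
  { destruct n; simpl; [lra|]. pose proof (cond_pos_sum a n Ha). lra. }
  lra.
Qed.

Lemma zs_bounded (u : Z -> R) : zsummable u -> exists B, forall j, Rabs (u j) <= B.
Proof.
  intros [H1 H2].
  exists (Series (fun n => Rabs (u (Z.of_nat n))) + Series (fun n => Rabs (u (- Z.of_nat (S n))%Z))).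
  assert (P1 := term_le_Series _ (fun n => Rabs_pos _) H1).
  assert (P2 := term_le_Series _ (fun n => Rabs_pos _) H2).
  assert (Q1 := P1 0%nat). assert (Q2 := P2 0%nat).
  assert (0 <= Series (fun n => Rabs (u (Z.of_nat n)))) by (eapply Rle_trans; [apply Rabs_pos|apply Q1]).
  assert (0 <= Series (fun n => Rabs (u (- Z.of_nat (S n))%Z))) by (eapply Rle_trans; [apply Rabs_pos|apply Q2]).
  intros j. destruct (Z_le_gt_dec 0 j).
  - replace j with (Z.of_nat (Z.to_nat j)) by lia. specialize (P1 (Z.to_nat j)). lra.
  - replace j with (- Z.of_nat (S (Z.to_nat (- j - 1))))%Z by lia.
    specialize (P2 (Z.to_nat (- j - 1))). lra.
Qed.

Lemma zs_mulb (a : Z -> R) (b : Z -> R) B : zsummable a -> (forall j, Rabs (b j) <= B) -> zsummable (fun j => a j * b j).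
Proof.
  intros Ha Hb. apply (zs_dom (fun j => B * Rabs (a j))).
  - apply zs_scal, zs_abs, Ha.
  - intros j. rewrite Rabs_mult, Rabs_mult, Rabs_Rabsolu.
    assert (0 <= B) by (eapply Rle_trans; [apply Rabs_pos| apply (Hb 0%Z)]).
    rewrite (Rabs_pos_eq B) by lra. rewrite Rmult_comm. apply Rmult_le_compat_r; auto. apply Rabs_pos.
Qed.

Lemma zs_mul (a : Z -> R) (b : Z -> R) : zsummable a -> zsummable b -> zsummable (fun j => a j * b j).
Proof. intros Ha Hb. destruct (zs_bounded b Hb) as [B HB]. now apply (zs_mulb a b B). Qed.


Lemma lim_partial (a : nat -> R) : ex_series a -> is_lim_seq (sum_f_R0 a) (Series a).
Proof. intros H. apply is_lim_seq_Reals. apply is_series_Reals. now apply Series_correct. Qed.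

Lemma tail_bound (a b : nat -> R) N : (forall n, Rabs (a n) <= b n) -> ex_series b ->
  Rabs (Series a - sum_f_R0 a N) <= Series b - sum_f_R0 b N.
Proof.
  intros H Hb. assert (Ha : ex_series a) by (eapply ex_series_R_le; eauto).
  rewrite (Series_incr_n a (S N)) by (lia || auto).
  rewrite (Series_incr_n b (S N)) by (lia || auto). simpl pred.
  replace (sum_f_R0 a N + Series (fun k => a (S N + k)%nat) - sum_f_R0 a N)
    with (Series (fun k => a (S N + k)%nat)) by ring.
  replace (sum_f_R0 b N + Series (fun k => b (S N + k)%nat) - sum_f_R0 b N)
    with (Series (fun k => b (S N + k)%nat)) by ring.
  assert (Hbt : ex_series (fun k => b (S N + k)%nat)) by (apply (ex_series_incr_n b (S N)); auto).
  assert (Hat : ex_series (fun k => Rabs (a (S N + k)%nat))).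
  { eapply ex_series_R_le; [|exact Hbt]. intros n. rewrite Rabs_Rabsolu. apply H. }
  eapply Rle_trans; [apply Series_Rabs; exact Hat|].
  apply Series_le; auto. intros n; split; [apply Rabs_pos| apply H].
Qed.

Definition PS (u : Z -> R) (N : nat) : R :=
  sum_f_R0 (fun n => u (Z.of_nat n)) N + sum_f_R0 (fun n => u (- Z.of_nat (S n))%Z) N.

Lemma PS_lim (u : Z -> R) : zsummable u -> is_lim_seq (PS u) (zsum u).
Proof.
  intros Hu. unfold PS, zsum. apply is_lim_seq_plus'; apply lim_partial.
  - now apply zs_pos. - now apply zs_neg.
Qed.

Lemma PS_tail (u : Z -> R) D N : zsummable D -> (forall j, Rabs (u j) <= D j) ->
  Rabs (zsum u - PS u N) <= zsum D - PS D N.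
Proof.
  intros [H1 H2] H. unfold zsum, PS.
  assert (E1 : ex_series (fun n => D (Z.of_nat n))).
  { eapply ex_series_ext; [|exact H1]. intros n. apply Rabs_pos_eq. eapply Rle_trans; [apply Rabs_pos|apply H]. }
  assert (E2 : ex_series (fun n => D (- Z.of_nat (S n))%Z)).
  { eapply ex_series_ext; [|exact H2]. intros n. apply Rabs_pos_eq. eapply Rle_trans; [apply Rabs_pos|apply H]. }
  pose proof (tail_bound (fun n => u (Z.of_nat n)) _ N (fun n => H _) E1).
  pose proof (tail_bound (fun n => u (- Z.of_nat (S n))%Z) _ N (fun n => H _) E2).
  replace (Series (fun n => D (Z.of_nat n)) + Series (fun n => D (- Z.of_nat (S n))%Z) -
     (sum_f_R0 (fun n => D (Z.of_nat n)) N + sum_f_R0 (fun n => D (- Z.of_nat (S n))%Z) N))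
   with ((Series (fun n => D (Z.of_nat n)) - sum_f_R0 (fun n => D (Z.of_nat n)) N) +
     (Series (fun n => D (- Z.of_nat (S n))%Z) - sum_f_R0 (fun n => D (- Z.of_nat (S n))%Z) N)) by ring.
  eapply Rle_trans; [|apply Rplus_le_compat; [exact H0|exact H3]].
  eapply Rle_trans; [|apply Rabs_triang]. right. f_equal. ring.
Qed.

Lemma der_sum (F : nat -> R -> R) dF x N :
  (forall n, is_derive (F n) x (dF n)) ->
  is_derive (fun t => sum_f_R0 (fun n => F n t) N) x (sum_f_R0 dF N).
Proof.
  intros H. induction N; simpl.
  - apply H.
  - apply (is_derive_plus (fun t => sum_f_R0 (fun n => F n t) N) (F (S N))); auto.
Qed.

Lemma conserve (f g : Z -> R -> R) :
  (forall j t, is_derive (f j) t (g j t)) ->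
  (forall t, zsummable (fun j => f j t)) ->
  (forall a b, exists D, zsummable D /\ forall t, a <= t <= b -> forall j, Rabs (g j t) <= D j) ->
  (forall t, zsum (fun j => g j t) = 0) ->
  forall t1 t2, zsum (fun j => f j t1) = zsum (fun j => f j t2).
Proof.
  intros Hd Hf Hg H0 t1 t2.
  destruct (Hg (Rmin t1 t2) (Rmax t1 t2)) as [D [HD HgD]].
  set (eps := fun N => zsum D - PS D N).
  assert (Heps : is_lim_seq eps 0).
  { replace 0 with (zsum D - zsum D) by ring. unfold eps.
    apply is_lim_seq_minus'; [apply is_lim_seq_const| apply PS_lim; auto]. }
  assert (Hb : forall N, Rabs (PS (fun j => f j t2) N - PS (fun j => f j t1) N) <= eps N * Rabs (t2 - t1)).
  { intros N.
    assert (Hder : forall x, is_derive (fun t => PS (fun j => f j t) N) x (PS (fun j => g j x) N)).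
    { intros x. unfold PS.
      apply (is_derive_plus (fun t => sum_f_R0 (fun n => f (Z.of_nat n) t) N)
                            (fun t => sum_f_R0 (fun n => f (- Z.of_nat (S n))%Z t) N));
      apply der_sum; intros; apply Hd. }
    destruct (MVT_gen (fun t => PS (fun j => f j t) N) t1 t2 (fun x => PS (fun j => g j x) N))
      as [c [Hc Heq]].
    - intros; apply Hder.
    - intros x _. apply continuity_pt_filterlim. apply (ex_derive_continuous (fun t => PS (fun j => f j t) N)).
      eexists; apply Hder.
    - cbv beta in Heq. rewrite Heq, Rabs_mult. apply Rmult_le_compat_r; [apply Rabs_pos|].
      rewrite <- Rabs_Ropp. replace (- PS (fun j => g j c) N) with (zsum (fun j => g j c) - PS (fun j => g j c) N)
        by (rewrite H0; ring).
      apply PS_tail; auto. }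
  assert (Hl : is_lim_seq (fun N => PS (fun j => f j t2) N - PS (fun j => f j t1) N)
                 (zsum (fun j => f j t2) - zsum (fun j => f j t1))).
  { apply is_lim_seq_minus'; apply PS_lim; auto. }
  assert (Hl0 : is_lim_seq (fun N => PS (fun j => f j t2) N - PS (fun j => f j t1) N) 0).
  { apply (is_lim_seq_le_le (fun N => - (eps N * Rabs (t2 - t1))) _ (fun N => eps N * Rabs (t2 - t1))).
    - intros N. specialize (Hb N). apply Rabs_le_between in Hb. exact Hb.
    - replace (Finite 0) with (Finite (- (0 * Rabs (t2 - t1)))) by (f_equal; ring).
      apply (is_lim_seq_opp _ (Finite (0 * Rabs (t2 - t1)))).
      apply is_lim_seq_mult'; [exact Heps| apply is_lim_seq_const].
    - replace (Finite 0) with (Finite (0 * Rabs (t2 - t1))) by (f_equal; ring).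
      apply is_lim_seq_mult'; [exact Heps| apply is_lim_seq_const]. }
  apply is_lim_seq_unique in Hl. apply is_lim_seq_unique in Hl0.
  rewrite Hl in Hl0. injection Hl0. intros; lra.
Qed.


Lemma zs_ext (u : Z -> R) v : (forall j, u j = v j) -> zsummable u -> zsummable v.
Proof. intros H Hu. apply (zs_dom u); auto. intros; rewrite H; lra. Qed.

Lemma Dplus_eq (h : R) (u : Z -> R) (j : Z) : Dplus h u j = Rinv h * u (j + 1)%Z + (- / h) * u j.
Proof. unfold Dplus, Splus, Rdiv. ring. Qed.
Lemma Dminus_eq (h : R) (u : Z -> R) (j : Z) : Dminus h u j = Rinv h * u j + (- / h) * u (j - 1)%Z.
Proof. unfold Dminus, Sminus, Rdiv. ring. Qed.
Lemma Dzero_eq (h : R) (u : Z -> R) (j : Z) : Dzero h u j = Rinv (2 * h) * u (j + 1)%Z + (- / (2 * h)) * u (j - 1)%Z.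
Proof. unfold Dzero, Splus, Sminus, Rdiv. ring. Qed.

Lemma zs_Dplus (h : R) (u : Z -> R) : zsummable u -> zsummable (Dplus h u).
Proof. intros Hu. eapply zs_ext; [intros j; symmetry; apply Dplus_eq|]. apply zs_lin; auto. now apply zs_shiftp. Qed.
Lemma zs_Dminus (h : R) (u : Z -> R) : zsummable u -> zsummable (Dminus h u).
Proof. intros Hu. eapply zs_ext; [intros j; symmetry; apply Dminus_eq|]. apply zs_lin; auto. now apply zs_shiftm. Qed.
Lemma zs_Dzero (h : R) (u : Z -> R) : zsummable u -> zsummable (Dzero h u).
Proof. intros Hu. eapply zs_ext; [intros j; symmetry; apply Dzero_eq|]. apply zs_lin; [now apply zs_shiftp| now apply zs_shiftm]. Qed.
Lemma zs_pow (h : R) (k : nat) (u : Z -> R) : zsummable u -> zsummable (DmDp_pow h k u).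
Proof. intros Hu. induction k; simpl; auto. apply zs_Dminus, zs_Dplus, IHk. Qed.
Lemma zs_Lk (h : R) (k : nat) (u : Z -> R) : zsummable u -> zsummable (Lk h k u).
Proof. intros; apply zs_Dzero, zs_pow; auto. Qed.

Definition pr (a b : Z -> R) := zsum (fun j => a j * b j).

Lemma pr_sym (a : Z -> R) (b : Z -> R) : pr a b = pr b a.
Proof. apply zsum_ext; intros; ring. Qed.

Lemma pr_shift (a : Z -> R) (b : Z -> R) : zsummable a -> zsummable b ->
  zsum (fun j => a j * b (j + 1)%Z) = zsum (fun j => a (j - 1)%Z * b j).
Proof.
  intros Ha Hb. rewrite <- (zsum_shiftp (fun j => a (j - 1)%Z * b j)).
  - apply zsum_ext; intros j. f_equal. f_equal. lia.
  - apply zs_mul; auto. now apply zs_shiftm.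
Qed.

Lemma pr_Dplus (h : R) (a : Z -> R) (b : Z -> R) : zsummable a -> zsummable b -> pr a (Dplus h b) = - pr (Dminus h a) b.
Proof.
  intros Ha Hb. unfold pr.
  rewrite (zsum_ext _ (fun j => / h * (a j * b (j + 1)%Z) + (- / h) * (a j * b j)))
    by (intros; rewrite Dplus_eq; ring).
  rewrite (zsum_ext (fun j => Dminus h a j * b j) (fun j => / h * (a j * b j) + (- / h) * (a (j - 1)%Z * b j)))
    by (intros; rewrite Dminus_eq; ring).
  rewrite !zsum_lin.
  - rewrite pr_shift; auto. ring.
  - apply zs_mul; auto.
  - apply zs_mul; auto. now apply zs_shiftm.
  - apply zs_mul; auto. now apply zs_shiftp.
  - apply zs_mul; auto.
Qed.

Lemma pr_Dminus (h : R) (a : Z -> R) (b : Z -> R) : zsummable a -> zsummable b -> pr a (Dminus h b) = - pr (Dplus h a) b.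
Proof.
  intros Ha Hb. rewrite pr_sym, (pr_sym (Dplus h a)). rewrite (pr_Dplus h b a); auto. ring.
Qed.

Lemma pr_Dzero (h : R) (a : Z -> R) (b : Z -> R) : zsummable a -> zsummable b -> pr a (Dzero h b) = - pr (Dzero h a) b.
Proof.
  intros Ha Hb. unfold pr.
  rewrite (zsum_ext (fun j => a j * Dzero h b j) (fun j => / 2 * (a j * Dplus h b j) + / 2 * (a j * Dminus h b j))).
  2:{ intros j. unfold Dzero, Dplus, Dminus, Splus, Sminus, Rdiv. rewrite Rinv_mult. ring. }
  rewrite (zsum_ext (fun j => Dzero h a j * b j) (fun j => / 2 * (Dplus h a j * b j) + / 2 * (Dminus h a j * b j))).
  2:{ intros j. unfold Dzero, Dplus, Dminus, Splus, Sminus, Rdiv. rewrite Rinv_mult. ring. }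
  rewrite !zsum_lin.
  - fold (pr a (Dplus h b)) (pr a (Dminus h b)) (pr (Dplus h a) b) (pr (Dminus h a) b).
    rewrite pr_Dplus, pr_Dminus; auto. ring.
  - apply zs_mul; auto using zs_Dplus.
  - apply zs_mul; auto using zs_Dminus.
  - apply zs_mul; auto using zs_Dplus.
  - apply zs_mul; auto using zs_Dminus.
Qed.

Lemma pr_Delta (h : R) (a : Z -> R) (b : Z -> R) : zsummable a -> zsummable b ->
  pr a (Dminus h (Dplus h b)) = pr (Dminus h (Dplus h a)) b.
Proof.
  intros Ha Hb. rewrite pr_Dminus; auto using zs_Dplus.
  rewrite pr_Dplus; auto using zs_Dplus. ring.
Qed.

Lemma pow_S (h : R) (k : nat) (u : Z -> R) : DmDp_pow h (S k) u = DmDp_pow h k (Dminus h (Dplus h u)).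
Proof. unfold DmDp_pow. rewrite Nat.iter_succ_r. reflexivity. Qed.

Lemma pr_pow (h : R) (k : nat) (a : Z -> R) (b : Z -> R) : zsummable a -> zsummable b ->
  pr a (DmDp_pow h k b) = pr (DmDp_pow h k a) b.
Proof.
  revert a. induction k; intros a Ha Hb; simpl; auto.
  change (pr a (Dminus h (Dplus h (DmDp_pow h k b))) = pr (DmDp_pow h (S k) a) b).
  rewrite pr_Delta; auto using zs_pow. rewrite IHk; auto using zs_Dminus, zs_Dplus.
  now rewrite pow_S.
Qed.

Lemma comm_D0 (h : R) (u : Z -> R) : Dzero h (Dminus h (Dplus h u)) = Dminus h (Dplus h (Dzero h u)).
Proof.
  apply functional_extensionality; intros j.
  unfold Dzero, Dminus, Dplus, Splus, Sminus.
  replace (j - 1 + 1)%Z with j by lia. replace (j + 1 - 1)%Z with j by lia.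
  replace (j - 1 + 1 + 1)%Z with (j + 1)%Z by lia.
  replace (j - 1 - 1 + 1)%Z with (j - 1)%Z by lia.
  set (A := u (j + 1 + 1)%Z). set (B := u (j + 1)%Z). set (E := u j).
  set (F := u (j - 1)%Z). set (G := u (j - 1 - 1)%Z).
  unfold Rdiv. rewrite !Rinv_mult. ring.
Qed.

Lemma comm_D0_pow (h : R) (k : nat) (u : Z -> R) : Dzero h (DmDp_pow h k u) = DmDp_pow h k (Dzero h u).
Proof.
  induction k; simpl; auto. change (Dzero h (Dminus h (Dplus h (DmDp_pow h k u))) = Dminus h (Dplus h (DmDp_pow h k (Dzero h u)))).
  rewrite comm_D0. now rewrite IHk.
Qed.

Lemma pr_Lk (h : R) (k : nat) (a : Z -> R) (b : Z -> R) : zsummable a -> zsummable b -> pr a (Lk h k b) = - pr (Lk h k a) b.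
Proof.
  intros Ha Hb. unfold Lk. rewrite pr_Dzero; auto using zs_pow.
  rewrite pr_pow; auto using zs_Dzero. rewrite comm_D0_pow. reflexivity.
Qed.

Lemma pr_Lk_self (h : R) (k : nat) (a : Z -> R) : zsummable a -> pr a (Lk h k a) = 0.
Proof. intros Ha. pose proof (pr_Lk h k a a Ha Ha). rewrite (pr_sym (Lk h k a)) in H. lra. Qed.


Lemma der_lin2 (A B : R -> R) (t da db c1 c2 : R) : is_derive A t da -> is_derive B t db ->
  is_derive (fun s => c1 * A s + c2 * B s) t (c1 * da + c2 * db).
Proof.
  intros HA HB. apply (is_derive_plus (fun s => c1 * A s) (fun s => c2 * B s));
  apply is_derive_scal; auto.
Qed.

Lemma der_mul (A B : R -> R) (t da db : R) : is_derive A t da -> is_derive B t db ->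
  is_derive (fun s => A s * B s) t (da * B t + A t * db).
Proof.
  intros HA HB. apply (is_derive_mult A B); auto. intros; apply Rmult_comm.
Qed.

Lemma der_mulc (A : R -> R) (t da c : R) : is_derive A t da ->
  is_derive (fun s => A s * c) t (da * c).
Proof.
  intros HA. apply (is_derive_ext (fun s => c * A s)). intros; apply Rmult_comm.
  replace (da * c) with (c * da) by ring. apply is_derive_scal; auto.
Qed.

Lemma der_minus (A B : R -> R) (t da db : R) : is_derive A t da -> is_derive B t db ->
  is_derive (fun s => A s - B s) t (da - db).
Proof. intros HA HB. apply (is_derive_minus A B); auto. Qed.


Lemma der_Dplus (h t : R) (V : R -> Z -> R) V' : (forall j, is_derive (fun s => V s j) t (V' j)) ->
  forall j, is_derive (fun s => Dplus h (V s) j) t (Dplus h V' j).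
Proof.
  intros HV j. apply (is_derive_ext (fun s => Rinv h * V s (j + 1)%Z + (- / h) * V s j)).
  - intros; symmetry; apply Dplus_eq.
  - rewrite Dplus_eq. apply der_lin2; auto.
Qed.
Lemma der_Dminus (h t : R) (V : R -> Z -> R) V' : (forall j, is_derive (fun s => V s j) t (V' j)) ->
  forall j, is_derive (fun s => Dminus h (V s) j) t (Dminus h V' j).
Proof.
  intros HV j. apply (is_derive_ext (fun s => Rinv h * V s j + (- / h) * V s (j - 1)%Z)).
  - intros; symmetry; apply Dminus_eq.
  - rewrite Dminus_eq. apply der_lin2; auto.
Qed.
Lemma der_Dzero (h t : R) (V : R -> Z -> R) V' : (forall j, is_derive (fun s => V s j) t (V' j)) ->
  forall j, is_derive (fun s => Dzero h (V s) j) t (Dzero h V' j).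
Proof.
  intros HV j. apply (is_derive_ext (fun s => Rinv (2 * h) * V s (j + 1)%Z + (- / (2 * h)) * V s (j - 1)%Z)).
  - intros; symmetry; apply Dzero_eq.
  - rewrite Dzero_eq. apply der_lin2; auto.
Qed.

Lemma der_pow (h t : R) (U : R -> Z -> R) (U' : Z -> R) (HU : forall j, is_derive (fun s => U s j) t (U' j)) k : forall j, is_derive (fun s => DmDp_pow h k (U s) j) t (DmDp_pow h k U' j).
Proof.
  induction k; simpl; auto.
  apply (der_Dminus h t (fun s => Dplus h (DmDp_pow h k (U s)))).
  apply (der_Dplus h t (fun s => DmDp_pow h k (U s))). auto.
Qed.

Lemma der_Lk (h t : R) (U : R -> Z -> R) (U' : Z -> R) (HU : forall j, is_derive (fun s => U s j) t (U' j)) k : forall j, is_derive (fun s => Lk h k (U s) j) t (Lk h k U' j).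
Proof. unfold Lk. apply (der_Dzero h t (fun s => DmDp_pow h k (U s))). apply der_pow; auto. Qed.

Lemma lin_bound c1 c2 x y B : Rabs x <= B -> Rabs y <= B ->
  Rabs (c1 * x + c2 * y) <= (Rabs c1 + Rabs c2) * B.
Proof.
  intros Hx Hy. eapply Rle_trans; [apply Rabs_triang|]. rewrite !Rabs_mult.
  pose proof (Rabs_pos c1). pose proof (Rabs_pos c2).
  assert (Rabs c1 * Rabs x <= Rabs c1 * B) by (apply Rmult_le_compat_l; auto).
  assert (Rabs c2 * Rabs y <= Rabs c2 * B) by (apply Rmult_le_compat_l; auto). lra.
Qed.

Lemma Lk_bound (h : R) (k : nat) : exists K, forall u B, (forall j, Rabs (u j) <= B) -> forall j, Rabs (Lk h k u j) <= K * B.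
Proof.
  set (c := Rabs (Rinv h) + Rabs (- / h)).
  assert (Hp : forall u B, (forall j, Rabs (u j) <= B) -> forall j, Rabs (Dplus h u j) <= c * B).
  { intros u B H j. rewrite Dplus_eq. apply lin_bound; auto. }
  assert (Hm : forall u B, (forall j, Rabs (u j) <= B) -> forall j, Rabs (Dminus h u j) <= c * B).
  { intros u B H j. rewrite Dminus_eq. apply lin_bound; auto. }
  assert (HP : exists K, forall u B, (forall j, Rabs (u j) <= B) -> forall j, Rabs (DmDp_pow h k u j) <= K * B).
  { induction k.
    - exists 1. intros; simpl. rewrite Rmult_1_l; auto.
    - destruct IHk as [K HK]. exists (c * (c * K)). intros u B H j. simpl.
      rewrite !Rmult_assoc. apply Hm. apply Hp. apply HK. auto. }
  destruct HP as [K HK]. exists ((Rabs (Rinv (2 * h)) + Rabs (- / (2 * h))) * K).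
  intros u B H j. unfold Lk. rewrite Dzero_eq, Rmult_assoc. apply lin_bound; apply HK; auto.
Qed.


Lemma Delta_eq (h : R) (u : Z -> R) (j : Z) : h <> 0 ->
  (u (j + 1)%Z - 2 * u j + u (j - 1)%Z) / h ^ 2 = Dminus h (Dplus h u) j.
Proof.
  intros hne. unfold Dminus, Dplus, Splus, Sminus.
  replace (j - 1 + 1)%Z with j by lia. field. auto.
Qed.

Lemma pr_Delta_Lk (h : R) (k : nat) (u : Z -> R) : zsummable u -> pr (Dminus h (Dplus h u)) (Lk h k u) = 0.
Proof.
  intros Hu. rewrite pr_Lk; auto using zs_Dminus, zs_Dplus.
  replace (Lk h k (Dminus h (Dplus h u))) with (Lk h (S k) u) by (unfold Lk; now rewrite pow_S).
  rewrite pr_sym, pr_Lk_self; auto. ring.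
Qed.

Lemma prod_bound x x' y y' : Rabs (x * y) <= (Rabs x + Rabs x') * (Rabs y + Rabs y').
Proof.
  rewrite Rabs_mult. pose proof (Rabs_pos x). pose proof (Rabs_pos x').
  pose proof (Rabs_pos y). pose proof (Rabs_pos y'). nra.
Qed.

Lemma abs3 (a b c : R) : Rabs (a - 2 * b + c) <= Rabs a + 2 * Rabs b + Rabs c.
Proof.
  eapply Rle_trans; [apply Rabs_triang|]. 
  assert (Rabs (a - 2 * b) <= Rabs a + 2 * Rabs b).
  { unfold Rminus. eapply Rle_trans; [apply Rabs_triang|]. rewrite Rabs_Ropp, Rabs_mult, (Rabs_pos_eq 2) by lra. lra. }
  lra.
Qed.

Theorem mainTheorem5 (C h x0 : R) (hpos : 0 < h) (v w : R -> Z -> R)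
  (Hsol : is_semidiscrete_wave_solution h C v w)
  (Hdec : locally_dominated v w) :
  (forall k : nat,
     (forall t : R,
        Rk h k v w t = - zsum (fun j => v t j * Lk h k (w t) j * h)) /\
     (forall t1 t2 : R, Rk h k v w t1 = Rk h k v w t2)) /\
  (forall alpha alpha_t : R -> R -> R,
     (forall t x : R,
        is_derive (fun s => alpha s x) t (alpha_t t x) /\
        is_derive (fun s => alpha_t s x) t
          ((alpha t (x + h) - 2 * alpha t x + alpha t (x - h)) / h ^ 2
           - C * alpha t x)) ->
     (forall a b : R, exists M : Z -> R, zsummable M /\
        forall t : R, a <= t <= b -> forall j i : Z, (Z.abs i <= 1)%Z ->
          (Rabs (alpha t (x0 + IZR (j + i) * h))
           + Rabs (alpha_t t (x0 + IZR (j + i) * h)))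
          * (Rabs (v t j) + Rabs (w t j)) <= M j) ->
     forall t1 t2 : R,
       Tfun h x0 alpha alpha_t v w t1 = Tfun h x0 alpha alpha_t v w t2).
Proof.
  assert (hne : h <> 0) by lra.
  assert (Hsum : forall t, zsummable (v t) /\ zsummable (w t)).
  { intros t. destruct (Hdec t t) as [M [HM HMb]].
    split; apply (zs_dom' M); auto; intros j;
    specialize (HMb t (conj (Rle_refl t) (Rle_refl t)) j);
    pose proof (Rabs_pos (v t j)); pose proof (Rabs_pos (w t j)); lra. }
  split.
  - intros k.
    assert (Hanti : forall t, Rk h k v w t = - zsum (fun j => v t j * Lk h k (w t) j * h)).
    { intros t. destruct (Hsum t) as [Hv Hw]. unfold Rk.
      rewrite (zsum_ext (fun j => w t j * Lk h k (v t) j * h) (fun j => h * (w t j * Lk h k (v t) j))) by (intros; ring).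
      rewrite (zsum_ext (fun j => v t j * Lk h k (w t) j * h) (fun j => h * (v t j * Lk h k (w t) j))) by (intros; ring).
      rewrite !zsum_scal. fold (pr (w t) (Lk h k (v t))) (pr (v t) (Lk h k (w t))).
      rewrite pr_Lk by auto. rewrite pr_sym. ring. }
    split; [exact Hanti|].
    intros t1 t2. unfold Rk.
    set (W2 := fun t j => (v t (j + 1)%Z - 2 * v t j + v t (j - 1)%Z) / h ^ 2 - C * v t j).
    apply (conserve (fun j t => w t j * Lk h k (v t) j * h)
                    (fun j t => (W2 t j * Lk h k (v t) j + w t j * Lk h k (w t) j) * h)).
    + intros j t. apply der_mulc. apply der_mul.
      * apply Hsol.
      * apply (der_Lk h t v (w t)). intros j'; apply Hsol.
    + intros t. destruct (Hsum t) as [Hv Hw].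
      apply (zs_ext (fun j => h * (w t j * Lk h k (v t) j))); [intros; ring|].
      apply zs_scal, zs_mul; auto using zs_Lk.
    + intros a b. destruct (Hdec a b) as [M [HM HMb]]. destruct (zs_bounded M HM) as [BM HBM].
      destruct (Lk_bound h k) as [K HK].
      assert (Hvw : forall t, a <= t <= b -> forall j, Rabs (v t j) <= Rabs (M j) /\ Rabs (w t j) <= Rabs (M j)).
      { intros t Ht j. specialize (HMb t Ht j). pose proof (Rle_abs (M j)).
        pose proof (Rabs_pos (v t j)); pose proof (Rabs_pos (w t j)). lra. }
      assert (HL : forall t, a <= t <= b -> forall j,
                 Rabs (Lk h k (v t) j) <= K * BM /\ Rabs (Lk h k (w t) j) <= K * BM).
      { intros t Ht j. split; apply HK; intros j'; eapply Rle_trans; try apply HBM; apply Hvw; auto. }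
      set (KB := K * BM).
      set (Ma := fun j => Rabs (M j)).
      set (c1 := Rabs h * (Rabs (/ h ^ 2) * KB)).
      set (c2 := Rabs h * ((2 * Rabs (/ h ^ 2) + Rabs C + 1) * KB)).
      exists (fun j => c1 * Ma (j + 1)%Z + (c2 * Ma j + c1 * Ma (j - 1)%Z)).
      assert (HMa : zsummable Ma) by (apply zs_abs; auto).
      split.
      * apply zs_plus; [apply zs_scal, zs_shiftp; auto|].
        apply zs_plus; apply zs_scal; auto. apply zs_shiftm; auto.
      * intros t Ht j. cbv beta.
        destruct (HL t Ht j) as [HL1 HL2].
        destruct (Hvw t Ht j) as [Hv0 Hw0].
        destruct (Hvw t Ht (j + 1)%Z) as [Hv1 _].
        destruct (Hvw t Ht (j - 1)%Z) as [Hv2 _].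
        assert (HW2 : Rabs (W2 t j) <= Rabs (/ h ^ 2) * (Ma (j + 1)%Z + 2 * Ma j + Ma (j - 1)%Z) + Rabs C * Ma j).
        { unfold W2, Ma. unfold Rdiv.
          eapply Rle_trans; [apply Rabs_triang|]. rewrite Rabs_Ropp, !Rabs_mult.
          pose proof (abs3 (v t (j + 1)%Z) (v t j) (v t (j - 1)%Z)).
          pose proof (Rabs_pos (/ (h ^ 2))). pose proof (Rabs_pos C).
          rewrite Rmult_comm.
          apply Rplus_le_compat; apply Rmult_le_compat_l; auto; lra. }
        assert (KB0 : 0 <= KB) by (eapply Rle_trans; [apply Rabs_pos|apply HL1]).
        rewrite Rabs_mult.
        assert (HX : Rabs (W2 t j * Lk h k (v t) j + w t j * Lk h k (w t) j) <= Rabs (W2 t j) * KB + Rabs (w t j) * KB).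
        { eapply Rle_trans; [apply Rabs_triang|]. rewrite !Rabs_mult.
          apply Rplus_le_compat; apply Rmult_le_compat_l; auto using Rabs_pos. }
        assert (HY : Rabs (W2 t j) * KB + Rabs (w t j) * KB <=
                     (Rabs (/ h ^ 2) * (Ma (j + 1)%Z + 2 * Ma j + Ma (j - 1)%Z) + Rabs C * Ma j) * KB + Ma j * KB).
        { apply Rplus_le_compat; apply Rmult_le_compat_r; auto. }
        unfold c1, c2. pose proof (Rabs_pos h).
        eapply Rle_trans. apply Rmult_le_compat_r; [apply Rabs_pos|]. eapply Rle_trans; [exact HX| exact HY].
        right. ring.
    + intros t. destruct (Hsum t) as [Hv Hw].
      rewrite (zsum_ext _ (fun j => (h * (Dminus h (Dplus h (v t)) j * Lk h k (v t) j) + (- (C * h)) * (v t j * Lk h k (v t) j)) + h * (w t j * Lk h k (w t) j))).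
      2:{ intros j. unfold W2. rewrite <- Delta_eq by auto. ring. }
      rewrite zsum_plus.
      * rewrite zsum_lin, zsum_scal.
        -- fold (pr (Dminus h (Dplus h (v t))) (Lk h k (v t))) (pr (v t) (Lk h k (v t))) (pr (w t) (Lk h k (w t))).
           rewrite pr_Delta_Lk, !pr_Lk_self by auto. ring.
        -- apply zs_mul; auto using zs_Lk, zs_Dminus, zs_Dplus.
        -- apply zs_mul; auto using zs_Lk.
      * apply zs_lin; apply zs_mul; auto using zs_Lk, zs_Dminus, zs_Dplus.
      * apply zs_scal; apply zs_mul; auto using zs_Lk.
  - intros alpha alpha_t Hal Hdom t1 t2. unfold Tfun.
    pose (A2 := fun t x => (alpha t (x + h) - 2 * alpha t x + alpha t (x - h)) / h ^ 2 - C * alpha t x).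
    pose (W2 := fun t j => (v t (j + 1)%Z - 2 * v t j + v t (j - 1)%Z) / h ^ 2 - C * v t j).
    assert (HB : forall a b, exists M, zsummable M /\ forall t, a <= t <= b -> forall j i, (Z.abs i <= 1)%Z ->
               Rabs (alpha t (x0 + IZR (j + i) * h) * v t j) <= M j).
    { intros a b. destruct (Hdom a b) as [M [HM HMb]]. exists M. split; auto.
      intros t Ht j i Hi. specialize (HMb t Ht j i Hi).
      eapply Rle_trans; [|exact HMb]. apply prod_bound. }
    assert (Hsimp : forall t j,
      ((alpha_t t (x0 + IZR j * h) * w t j + alpha t (x0 + IZR j * h) * W2 t j) -
       (A2 t (x0 + IZR j * h) * v t j + alpha_t t (x0 + IZR j * h) * w t j)) * h =
      / h * (alpha t (x0 + IZR j * h) * v t (j + 1)%Z + alpha t (x0 + IZR j * h) * v t (j - 1)%Z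
             - alpha t (x0 + IZR (j + 1) * h) * v t j - alpha t (x0 + IZR (j - 1) * h) * v t j)).
    { intros t j. unfold W2, A2.
      replace (x0 + IZR j * h + h) with (x0 + IZR (j + 1) * h) by (rewrite plus_IZR; ring).
      replace (x0 + IZR j * h - h) with (x0 + IZR (j - 1) * h) by (rewrite minus_IZR; ring).
      field. auto. }
    apply (conserve (fun j t => (alpha t (x0 + IZR j * h) * w t j - alpha_t t (x0 + IZR j * h) * v t j) * h)
       (fun j t => ((alpha_t t (x0 + IZR j * h) * w t j + alpha t (x0 + IZR j * h) * W2 t j)
                   - (A2 t (x0 + IZR j * h) * v t j + alpha_t t (x0 + IZR j * h) * w t j)) * h)).
    + intros j t. apply der_mulc. apply der_minus.
      * apply (der_mul (fun s => alpha s (x0 + IZR j * h)) (fun s => w s j)).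
        -- apply (proj1 (Hal t _)).
        -- apply Hsol.
      * apply (der_mul (fun s => alpha_t s (x0 + IZR j * h)) (fun s => v s j)).
        -- apply (proj2 (Hal t _)).
        -- apply Hsol.
    + intros t. destruct (Hdom t t) as [M [HM HMb]].
      apply (zs_dom' (fun j => Rabs h * M j)); [apply zs_scal; auto|].
      intros j. specialize (HMb t (conj (Rle_refl t) (Rle_refl t)) j 0%Z ltac:(simpl; lia)).
      rewrite Z.add_0_r in HMb. rewrite Rabs_mult, Rmult_comm. apply Rmult_le_compat_l; [apply Rabs_pos|].
      eapply Rle_trans; [|exact HMb]. unfold Rminus.
      eapply Rle_trans; [apply Rabs_triang|]. rewrite Rabs_Ropp, !Rabs_mult.
      pose proof (Rabs_pos (alpha t (x0 + IZR j * h))). pose proof (Rabs_pos (alpha_t t (x0 + IZR j * h))).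
      pose proof (Rabs_pos (v t j)). pose proof (Rabs_pos (w t j)). nra.
    + intros a b. destruct (HB a b) as [M [HM HMb]].
      pose (Ma := fun j => Rabs (M j)).
      assert (HMa : zsummable Ma) by (apply zs_abs; auto).
      exists (fun j => Rabs (/ h) * (Ma (j + 1)%Z + Ma (j - 1)%Z + 2 * Ma j)).
      split.
      * apply zs_scal. apply zs_plus; [apply zs_plus|]; auto using zs_shiftp, zs_shiftm.
        apply (zs_ext (fun j => 2 * Ma j)); auto. apply zs_scal; auto.
      * intros t Ht j. cbv beta. rewrite Hsimp. rewrite Rabs_mult.
        apply Rmult_le_compat_l; [apply Rabs_pos|].
        assert (E1 := HMb t Ht (j + 1)%Z (-1)%Z ltac:(simpl; lia)).
        replace (j + 1 + -1)%Z with j in E1 by lia.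
        assert (E2 := HMb t Ht (j - 1)%Z 1%Z ltac:(simpl; lia)).
        replace (j - 1 + 1)%Z with j in E2 by lia.
        assert (E3 := HMb t Ht j 1%Z ltac:(simpl; lia)).
        assert (E4 := HMb t Ht j (-1)%Z ltac:(simpl; lia)).
        replace (j + -1)%Z with (j - 1)%Z in E4 by lia.
        unfold Ma.
        pose proof (Rle_abs (M (j + 1)%Z)). pose proof (Rle_abs (M (j - 1)%Z)). pose proof (Rle_abs (M j)).
        unfold Rminus. 
        eapply Rle_trans; [apply Rabs_triang|]. rewrite Rabs_Ropp.
        eapply Rle_trans; [apply Rplus_le_compat_r; apply Rabs_triang|]. rewrite Rabs_Ropp.
        eapply Rle_trans; [apply Rplus_le_compat_r; apply Rplus_le_compat_r; apply Rabs_triang|].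
        lra.
    + intros t. destruct (HB t t) as [M [HM HMb]].
      specialize (HMb t (conj (Rle_refl t) (Rle_refl t))).
      pose (c1 := fun j => alpha t (x0 + IZR (j - 1) * h) * v t j).
      pose (c2 := fun j => alpha t (x0 + IZR (j + 1) * h) * v t j).
      assert (Hc1 : zsummable c1).
      { apply (zs_dom' M); auto. intros j. specialize (HMb j (-1)%Z ltac:(simpl; lia)).
        replace (j + -1)%Z with (j - 1)%Z in HMb by lia. exact HMb. }
      assert (Hc2 : zsummable c2).
      { apply (zs_dom' M); auto. intros j. apply (HMb j 1%Z ltac:(simpl; lia)). }
      rewrite (zsum_ext _ (fun j => / h * (c1 (j + 1)%Z + c2 (j - 1)%Z) + (- / h) * (c2 j + c1 j))).
      2:{ intros j. rewrite Hsimp. unfold c1, c2.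
          replace (j + 1 - 1)%Z with j by lia. replace (j - 1 + 1)%Z with j by lia. ring. }
      rewrite zsum_lin; [| apply zs_plus; auto using zs_shiftp, zs_shiftm | apply zs_plus; auto].
      rewrite !zsum_plus; auto using zs_shiftp, zs_shiftm.
      rewrite (zsum_shiftp c1 Hc1), (zsum_shiftm c2 Hc2). ring.
Qed.
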